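(* Let $n\geq 3$, $m=2^{n-1}$, and let $G_2(n)$ be the gyrogroup of order $2^n$ defined in the context. A subset $H$ of $G_2(n)$ is a subgyrogroup of $G_2(n)$ if and only if it has one of the following forms: (1) $H=\langle 2^s\rangle$, a subgroup of $P(n)$, with $0\leq s\leq n-1$; (2) $H=\langle 2^s, m\rangle$ with $0\leq s\leq n-1$; all such $H$ are subgroups of $G_2(n)$ (i.e. subgyrogroups on which the operation is associative, all gyroautomorphisms restricting to the identity) except $H=\langle 1,m\rangle=G_2(n)$; (3) $H=\langle m+2^s\rangle$ with $0\leq s\leq n-2$, which is a subgroup of $G_2(n)$.
   Context: Setup: $n\ge 3$, $m=2^{n-1}$, $G_2(n)=\{0,1,\dots,2^n-1\}$, $P(n)=\{0,\dots,m-1\}$, $H(n)=\{m,\dots,2^n-1\}$; $O_P,E_P$ are the odd/even elements of $P(n)$, $O_H,E_H$ the odd/even elements of $H(n)$. For $i,j\in G_2(n)$ let $t,s\in P(n)$ with $t\equiv i+j\pmod m$, $s\equiv i+j+\frac m2\pmod m$, and set $i\oplus j=t$ if $(i,j)\in (P(n)\times P(n))\cup\big[(H(n)\times H(n))\setminus(E_H\times O_H)\big]$; $i\oplus j=t+m$ if $(i,j)\in (P(n)\times H(n))\cup\big[(H(n)\times P(n))\setminus(E_H\times O_P)\big]$; $i\oplus j=s$ if $(i,j)\in E_H\times O_H$; $i\oplus j=s+m$ if $(i,j)\in E_H\times O_P$. Let $A\colon G_2(n)\to G_2(n)$ be $A(i)=r$ if $i\in O_P$, $A(i)=r+m$ if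 $i\in O_H$, $A(i)=i$ otherwise, where $r\in P(n)$, $r\equiv i+\frac m2\pmod m$. Let $M=[O_P\times(O_H\cup E_H)]\cup[O_H\times(O_P\cup E_H)]\cup[E_H\times(O_P\cup O_H)]$, and $\mathrm{gyr}[a,b]=A$ if $(a,b)\in M$, $\mathrm{gyr}[a,b]=I$ (identity) otherwise. Then $(G_2(n),\oplus)$ is a gyrogroup with identity $0$ and gyroautomorphisms $\mathrm{gyr}[a,b]$; the restriction of $\oplus$ to $P(n)$ is addition modulo $m$, so $P(n)\cong\mathbb{Z}_m$. A subgyrogroup of a gyrogroup $G$ is a nonempty subset $H$ which is a gyrogroup under the restriction of $\oplus$ and such that for all $a,b\in H$ the restriction of $\mathrm{gyr}[a,b]$ to $H$ is an automorphism of $H$. For a subset $X$, $\langle X\rangle$ denotes the subgyrogroup generated by $X$ (the smallest subgyrogroup containing $X$); in (1), $\langle 2^s\rangle$ is the cyclic subgroup of $P(n)\cong\mathbb{Z}_m$ generated by $2^s$ modulo $m$. *)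

(* Defs.v *)
(* G_2(n) is modelled as the natural numbers
   0 .. 2^n - 1; subsets of G_2(n) are predicates nat -> Prop contained in
   [x < 2^n]. *)
From mathcomp Require Import all_boot.
Set Implicit Arguments. Unset Strict Implicit. Unset Printing Implicit Defensive.

Definition mG (n : nat) : nat := 2 ^ n.-1.

Definition inP n (i : nat) : bool := i < mG n.
Definition inH n (i : nat) : bool := mG n <= i.
Definition OP n i : bool := inP n i && odd i.
Definition EP n i : bool := inP n i && ~~ odd i.
Definition OH n i : bool := inH n i && odd i.
Definition EH n i : bool := inH n i && ~~ odd i.

Definition oplus (n : nat) (i j : nat) : nat :=
  let m := mG n in
  let t := (i + j) %% m in
  let s := (i + j + m %/ 2) %% m in
  if EH n i && OH n j then s
  else if EH n i && OP n j then s + m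
  else if (inP n i && inP n j) || (inH n i && inH n j) then t
  else t + m.

Definition Amap (n : nat) (i : nat) : nat :=
  let m := mG n in
  let r := (i + m %/ 2) %% m in
  if OP n i then r else if OH n i then r + m else i.

Definition inM n (a b : nat) : bool :=
  [|| OP n a && (OH n b || EH n b),
      OH n a && (OP n b || EH n b)
    | EH n a && (OP n b || OH n b)].

Definition gyr (n : nat) (a b : nat) : nat -> nat :=
  if inM n a b then Amap n else id.

Definition is_gyrogroup_on (S : nat -> Prop) (op : nat -> nat -> nat)
  (g : nat -> nat -> nat -> nat) : Prop :=
  (forall a b, S a -> S b -> S (op a b)) /\
  (exists e, S e /\ (forall a, S a -> op e a = a) /\
             (forall a, S a -> exists b, S b /\ op b a = e)) /\
  (forall a b, S a -> S b ->
     (forall x, S x -> S (g a b x)) /\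
     (forall x y, S x -> S y -> g a b x = g a b y -> x = y) /\
     (forall y, S y -> exists x, S x /\ g a b x = y) /\
     (forall x y, S x -> S y -> g a b (op x y) = op (g a b x) (g a b y))) /\
  (forall a b c, S a -> S b -> S c ->
     op a (op b c) = op (op a b) (g a b c)) /\
  (forall a b c, S a -> S b -> S c -> g a b c = g (op a b) b c).

Definition subG (n : nat) (H : nat -> Prop) : Prop := forall x, H x -> x < 2 ^ n.

Definition is_subgyrogroup (n : nat) (H : nat -> Prop) : Prop :=
  subG n H /\ is_gyrogroup_on H (oplus n) (gyr n).

Definition is_subgroup (n : nat) (H : nat -> Prop) : Prop :=
  is_subgyrogroup n H /\
  (forall a b c, H a -> H b -> H c ->
     oplus n a (oplus n b c) = oplus n (oplus n a b) c) /\
  (forall a b c, H a -> H b -> H c -> gyr n a b c = c).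

Definition gen (n : nat) (X : nat -> Prop) : nat -> Prop :=
  fun x => forall K, is_subgyrogroup n K -> (forall y, X y -> K y) -> K x.

Definition cycP (n s : nat) : nat -> Prop :=
  fun x => exists k, x = (k * 2 ^ s) %% mG n.

Definition same_set (A B : nat -> Prop) : Prop := forall x, A x <-> B x.

(* Main.v *)
Require Import Defs.
From mathcomp Require Import all_boot.
From mathcomp Require Import zify.
From Stdlib Require Import ClassicalDescription Classical FunctionalExtensionality PropExtensionality.
Set Implicit Arguments. Unset Strict Implicit.


Lemma dvdm d m x : d %| m -> (d %| x %% m) = (d %| x).
Proof. by move=> h; rewrite /dvdn (modn_dvdm _ h). Qed.

Section Basic.
Lemma kE n : 2 < n -> mG n %/ 2 = 2 ^ (n - 2).
Proof.
move=> hn; rewrite /mG; have -> : n.-1 = (n-2).+1 by lia.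
by rewrite expnS mulKn.
Qed.

Lemma mkE n : 2 < n -> mG n = (mG n %/ 2) * 2.
Proof.
move=> hn; rewrite kE // /mG; have -> : n.-1 = (n-2).+1 by lia.
by rewrite expnS mulnC.
Qed.

Lemma k_even n : 2 < n -> odd (mG n %/ 2) = false.
Proof. move=> hn; rewrite kE // oddX; apply/negbTE; rewrite negb_or /=; apply/eqP; lia. Qed.

Lemma m_even n : 2 < n -> odd (mG n) = false.
Proof. by move=> hn; rewrite mkE // oddM andbF. Qed.

Lemma m_gt0 n : 0 < mG n.
Proof. by rewrite /mG expn_gt0. Qed.

Lemma k_gt0 n : 2 < n -> 0 < mG n %/ 2.
Proof. by move=> hn; rewrite kE // expn_gt0. Qed.

Lemma twonE n : 2 < n -> 2 ^ n = mG n * 2.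
Proof. move=> hn; rewrite /mG -expnSr; congr (_ ^ _); lia. Qed.

Lemma dvd_m n s : s <= n - 1 -> 2 ^ s %| mG n.
Proof. move=> h; rewrite /mG; apply: dvdn_exp2l; lia. Qed.

End Basic.


Definition cc n i j : bool := inH n i && ~~ odd i && odd j.

Lemma decomp n x : x < mG n * 2 -> x = inH n x * mG n + x %% mG n.
Proof.
move=> hx; rewrite /inH; case: leqP => h /=.
  have -> : x = mG n + (x - mG n) by lia.
  rewrite modnDl modn_small; lia.
by rewrite modn_small.
Qed.

Lemma hr_lt n (h : bool) r : r < mG n -> h * mG n + r < mG n * 2.
Proof. by case: h => /=; lia. Qed.
Lemma hr_H n (h : bool) r : r < mG n -> inH n (h * mG n + r) = h.
Proof. by rewrite /inH; case: h => /=; lia. Qed.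
Lemma hr_mod n (h : bool) r : r < mG n -> (h * mG n + r) %% mG n = r.
Proof. by move=> hr; case: h => /=; rewrite ?mul1n ?mul0n ?add0n ?modnDl modn_small. Qed.
Lemma hr_odd n (h : bool) r : 2 < n -> odd (h * mG n + r) = odd r.
Proof. by move=> hn; rewrite oddD oddM m_even // andbF. Qed.

Lemma modm_odd n x : 2 < n -> odd (x %% mG n) = odd x.
Proof. by move=> hn; rewrite odd_mod // m_even. Qed.

Lemma ext n x y : x < mG n * 2 -> y < mG n * 2 -> inH n x = inH n y ->
  x %% mG n = y %% mG n -> x = y.
Proof. by move=> hx hy e1 e2; rewrite (decomp hx) (decomp hy) e1 e2. Qed.

Lemma oplusE n i j : oplus n i j =
  (inH n i (+) inH n j) * mG n + (i + j + cc n i j * (mG n %/ 2)) %% mG n.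
Proof.
rewrite /oplus /EH /OH /OP /inP /cc /inH !ltnNge.
case: (mG n <= i); case: (mG n <= j); case: (odd i); case: (odd j) => /=;
  by rewrite ?mul1n ?mul0n ?add0n ?addn0 // addnC.
Qed.

Lemma AmapE n x : x < mG n * 2 -> Amap n x =
  inH n x * mG n + (x + odd x * (mG n %/ 2)) %% mG n.
Proof.
move=> hx; have D := decomp hx.
rewrite /Amap /OH /OP /inP /inH !ltnNge in D *.
move: D; case: (mG n <= x); case: (odd x) => /= D;
  rewrite ?mul1n ?mul0n ?add0n ?addn0 // in D *; by rewrite addnC.
Qed.

Section S.
Variable n : nat.
Hypothesis hn : 2 < n.
Local Notation m := (mG n).
Local Notation k := (mG n %/ 2).

Lemma oplus_lt i j : oplus n i j < m * 2.
Proof. by rewrite oplusE hr_lt // ltn_pmod // m_gt0. Qed.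
Lemma oplus_H i j : inH n (oplus n i j) = inH n i (+) inH n j.
Proof. by rewrite oplusE hr_H // ltn_pmod // m_gt0. Qed.
Lemma oplus_mod i j : oplus n i j %% m = (i + j + cc n i j * k) %% m.
Proof. by rewrite oplusE hr_mod // ltn_pmod // m_gt0. Qed.
Lemma oplus_odd i j : odd (oplus n i j) = odd i (+) odd j.
Proof. by rewrite oplusE hr_odd // modm_odd // !oddD oddM k_even // andbF addbF. Qed.

Lemma Amap_lt x : x < m * 2 -> Amap n x < m * 2.
Proof. by move=> hx; rewrite AmapE // hr_lt // ltn_pmod // m_gt0. Qed.
Lemma Amap_H x : x < m * 2 -> inH n (Amap n x) = inH n x.
Proof. by move=> hx; rewrite AmapE // hr_H // ltn_pmod // m_gt0. Qed.
Lemma Amap_mod x : x < m * 2 -> Amap n x %% m = (x + odd x * k) %% m.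
Proof. by move=> hx; rewrite AmapE // hr_mod // ltn_pmod // m_gt0. Qed.
Lemma Amap_odd x : x < m * 2 -> odd (Amap n x) = odd x.
Proof. by move=> hx; rewrite AmapE // hr_odd // modm_odd // !oddD oddM k_even // andbF addbF. Qed.

End S.


Lemma parity_mod M k X N1 N2 : M = k * 2 -> odd N1 = odd N2 ->
  (X + N1 * k) %% M = (X + N2 * k) %% M.
Proof.
move=> -> E; rewrite -(odd_double_half N1) -(odd_double_half N2) E.
rewrite !mulnDl -!muln2 -!mulnA [2 * k]mulnC !addnA.
by rewrite !(addnC _ (_ * (k * 2))) !modnMDl.
Qed.

Lemma modX M x y z w : x %% M = y %% M -> (z + x + w) %% M = (z + y + w) %% M.
Proof.
move=> e; rewrite -!(addnAC z w) -(modnDmr (z + w) x) -(modnDmr (z + w) y).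
by rewrite e.
Qed.

Lemma modX2 M x x' y y' w : x %% M = x' %% M -> y %% M = y' %% M ->
  (x + y + w) %% M = (x' + y' + w) %% M.
Proof.
move=> e1 e2; rewrite -(modnDml (x + y)) -(modnDm x y) e1 e2 modnDm.
by rewrite modnDml.
Qed.

Section S.
Variable n : nat.
Hypothesis hn : 2 < n.
Local Notation m := (mG n).
Local Notation k := (mG n %/ 2).

Lemma inME a b : inM n a b =
  [|| ~~ inH n a && odd a && inH n b,
      inH n a && odd a && ((~~ inH n b && odd b) || (inH n b && ~~ odd b))
    | inH n a && ~~ odd a && odd b].
Proof.
rewrite /inM /OP /OH /EH /inP /inH !ltnNge.
by case: (mG n <= a); case: (mG n <= b); case: (odd a); case: (odd b).
Qed.

Lemma gyr_lt a b c : c < m * 2 -> gyr n a b c < m * 2.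
Proof. by move=> hc; rewrite /gyr; case: inM => //; apply: Amap_lt. Qed.
Lemma gyr_H a b c : c < m * 2 -> inH n (gyr n a b c) = inH n c.
Proof. by move=> hc; rewrite /gyr; case: inM => //; apply: Amap_H. Qed.
Lemma gyr_odd a b c : c < m * 2 -> odd (gyr n a b c) = odd c.
Proof. by move=> hc; rewrite /gyr; case: inM => //; apply: Amap_odd. Qed.
Lemma gyr_mod a b c : c < m * 2 ->
  gyr n a b c %% m = (c + (inM n a b && odd c) * k) %% m.
Proof.
move=> hc; rewrite /gyr; case: inM => /=; first by rewrite Amap_mod.
by rewrite addn0.
Qed.

Lemma G3 a b c : a < m * 2 -> b < m * 2 -> c < m * 2 ->
  oplus n a (oplus n b c) = oplus n (oplus n a b) (gyr n a b c).
Proof.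
move=> ha hb hc; apply: (@ext n); rewrite ?oplus_lt //.
  by rewrite !oplus_H gyr_H // addbA.
have E1 : oplus n a (oplus n b c) %% m =
   (a + b + c + (cc n b c + cc n a (oplus n b c)) * k) %% m.
  rewrite oplus_mod // (modX2 _ (erefl (a %% m)) (oplus_mod n b c)).
  congr (_ %% _); rewrite !mulnDl; lia.
have E2 : oplus n (oplus n a b) (gyr n a b c) %% m =
   (a + b + c + (cc n a b + (inM n a b && odd c) + cc n (oplus n a b) (gyr n a b c)) * k) %% m.
  rewrite oplus_mod // (modX2 _ (oplus_mod n a b) (gyr_mod _ _ hc)).
  congr (_ %% _); rewrite !mulnDl; lia.
rewrite E1 E2; apply: parity_mod; first exact: mkE.
rewrite /cc !oplus_H // !oplus_odd // gyr_odd // inME.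
case: (inH n a); case: (inH n b); case: (inH n c);
  case: (odd a); case: (odd b); case: (odd c) => //.
Qed.

Lemma G4 a b c : gyr n a b c = gyr n (oplus n a b) b c.
Proof.
rewrite /gyr; suff -> : inM n a b = inM n (oplus n a b) b by [].
rewrite !inME oplus_H oplus_odd //.
by case: (inH n a); case: (inH n b); case: (odd a); case: (odd b).
Qed.

Lemma Amap_hom x y : x < m * 2 -> y < m * 2 ->
  Amap n (oplus n x y) = oplus n (Amap n x) (Amap n y).
Proof.
move=> hx hy; apply: (@ext n); rewrite ?Amap_lt ?oplus_lt //.
  by rewrite Amap_H ?oplus_lt // !oplus_H !Amap_H.
rewrite Amap_mod ?oplus_lt // oplus_mod //.
rewrite (modX2 _ (Amap_mod hx) (Amap_mod hy)).
rewrite -(modnDml (oplus n x y)) oplus_mod modnDml.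
have -> : x + y + cc n x y * k + odd (oplus n x y) * k =
  x + y + (cc n x y + odd (oplus n x y)) * k by lia.
have -> : x + odd x * k + (y + odd y * k) + cc n (Amap n x) (Amap n y) * k =
  x + y + (odd x + odd y + cc n (Amap n x) (Amap n y)) * k by lia.
apply: parity_mod; first exact: mkE.
rewrite /cc !Amap_H // !Amap_odd // oplus_odd //.
by case: (inH n x); case: (odd x); case: (odd y).
Qed.

Lemma Amap_inv x : x < m * 2 -> Amap n (Amap n x) = x.
Proof.
move=> hx; have h1 : Amap n x < m * 2 by apply: Amap_lt.
apply: (@ext n) => //; first by apply: Amap_lt.
  by rewrite !Amap_H.
rewrite Amap_mod // Amap_odd //.
rewrite -(modnDml (Amap n x)) Amap_mod // modnDml.
have -> : x %% m = (x + 0 * k) %% m by rewrite mul0n addn0.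
rewrite -addnA -mulnDl.
apply: parity_mod; first exact: mkE.
by case: (odd x).
Qed.

Lemma gyr_inv a b x : x < m * 2 -> gyr n a b (gyr n a b x) = x.
Proof. by move=> hx; rewrite /gyr; case: inM => //; apply: Amap_inv. Qed.

Lemma gyr_hom a b x y : x < m * 2 -> y < m * 2 ->
  gyr n a b (oplus n x y) = oplus n (gyr n a b x) (gyr n a b y).
Proof. by move=> hx hy; rewrite /gyr; case: inM => //; apply: Amap_hom. Qed.

End S.


Definition ginv n x := inH n x * mG n + (mG n - x %% mG n) %% mG n.

Lemma dvdm_add d m x y : d %| m -> (d %| x %% m + y) = (d %| x + y).
Proof. by move=> h; rewrite -(dvdm _ h) modnDml (dvdm _ h). Qed.

Section S.
Variable n : nat.
Hypothesis hn : 2 < n.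
Local Notation m := (mG n).
Local Notation k := (mG n %/ 2).

Lemma mod_lt x : x %% m < m.
Proof. by rewrite ltn_pmod // m_gt0. Qed.

Lemma inv_lt x : ginv n x < m * 2.
Proof. by rewrite /ginv hr_lt // mod_lt. Qed.
Lemma inv_H x : inH n (ginv n x) = inH n x.
Proof. by rewrite /ginv hr_H // mod_lt. Qed.
Lemma inv_mod x : ginv n x %% m = (m - x %% m) %% m.
Proof. by rewrite /ginv hr_mod // mod_lt. Qed.

Lemma zero_l a : a < m * 2 -> oplus n 0 a = a.
Proof.
move=> ha; rewrite oplusE /cc /inH leqNgt m_gt0 /= add0n addn0.
by rewrite -decomp.
Qed.

Lemma inv_l x : x < m * 2 -> oplus n (ginv n x) x = 0.
Proof.
move=> hx; apply: (@ext n); rewrite ?oplus_lt ?muln_gt0 ?m_gt0 //.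
  by rewrite oplus_H inv_H addbb /inH leqNgt m_gt0.
have hp := mod_lt x.
have hc : cc n (ginv n x) x = false.
  rewrite /cc -(modm_odd x hn) -(modm_odd (ginv n x) hn) inv_mod modm_odd // oddB ?m_even //; last exact: ltnW.
  by case: (odd (x %% m)); rewrite !andbF.
rewrite oplus_mod hc mul0n addn0 mod0n.
rewrite -modnDm inv_mod modnDml.
have -> : m - x %% m + x %% m = m by lia.
exact: modnn.
Qed.

Lemma idem_zero x : x < m * 2 -> oplus n x x = x -> x = 0.
Proof.
move=> hx e.
have hH : inH n x = false by rewrite -e oplus_H addbb.
have hm : x %% m = (x + x + cc n x x * k) %% m by rewrite -oplus_mod e.
move: hm; rewrite /cc hH /= mul0n addn0 => /eqP.
rewrite -{1}(addn0 x) eqn_modDl eq_sym => /eqP.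
by rewrite mod0n modn_small //; move: hH; rewrite /inH; lia.
Qed.

Lemma subgyro_of (S : nat -> Prop) :
  (forall x, S x -> x < m * 2) -> S 0 ->
  (forall a b, S a -> S b -> S (oplus n a b)) ->
  (forall a, S a -> S (ginv n a)) ->
  (forall a b x, S a -> S b -> S x -> S (gyr n a b x)) ->
  is_subgyrogroup n S.
Proof.
move=> hb h0 hcl hinv hg; split.
  by move=> x /hb; rewrite twonE.
split; first exact: hcl.
split.
  exists 0; split => //; split; first by move=> a /hb; apply: zero_l.
  by move=> a ha; exists (ginv n a); split; [apply: hinv | apply: inv_l; apply: hb].
split.
  move=> a b ha hb'; split; first by move=> x hx; apply: hg.
  split.
    move=> x y hx hy e.
    by rewrite -(gyr_inv hn a b (hb _ hx)) e gyr_inv //; apply: hb.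
  split.
    by move=> y hy; exists (gyr n a b y); split; [apply: hg | apply: gyr_inv => //; apply: hb].
  by move=> x y hx hy; apply: gyr_hom => //; apply: hb.
split.
  by move=> a b c ha hb' hc; apply: G3 => //; apply: hb.
by move=> a b c _ _ _; apply: G4.
Qed.

Lemma sg_facts (K : nat -> Prop) : is_subgyrogroup n K ->
  [/\ (forall x, K x -> x < m * 2), K 0,
      (forall a b, K a -> K b -> K (oplus n a b)) &
      (forall a, K a -> exists b, K b /\ oplus n b a = 0)].
Proof.
move=> [hs [hcl [[e [he [hid hinv]]] _]]].
have hb : forall x, K x -> x < m * 2 by move=> x /hs; rewrite twonE.
have e0 : e = 0 by apply: idem_zero; [apply: hb | apply: hid].
subst e; split => //.
Qed.

End S.


Definition Gset n s x : bool := (x < mG n * 2) && (2 ^ s %| x %% mG n).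
Definition Pset n s x : bool := Gset n s x && ~~ inH n x.
Definition Kset n s x : bool :=
  (x < mG n * 2) && (2 ^ s.+1 %| x %% mG n + inH n x * 2 ^ s).

Section S.
Variable n : nat.
Hypothesis hn : 2 < n.
Local Notation m := (mG n).
Local Notation k := (mG n %/ 2).

Lemma even_of_dvd s x : 0 < s -> 2 ^ s %| x %% m -> odd x = false.
Proof.
move=> hs h; rewrite -(modm_odd x hn); apply/negbTE; rewrite -dvdn2.
apply: dvdn_trans h; rewrite -{1}(expn1 2); exact: dvdn_exp2l.
Qed.

Lemma Gset_cl s a b : s <= n - 1 -> Gset n s a -> Gset n s b -> Gset n s (oplus n a b).
Proof.
move=> hs /andP [ha da] /andP [hb db]; have hd := dvd_m hs.
rewrite /Gset oplus_lt //=.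
case: s hs hd da db => [|s] hs hd da db; first by rewrite expn0 dvd1n.
rewrite oplus_mod /cc (even_of_dvd _ db) // andbF mul0n addn0.
by rewrite dvdm // dvdn_add // -(dvdm _ hd).
Qed.

Lemma Gset_inv s a : s <= n - 1 -> Gset n s a -> Gset n s (ginv n a).
Proof.
move=> hs /andP [ha da]; have hd := dvd_m hs.
rewrite /Gset inv_lt // inv_mod // dvdm //=.
by apply: dvdn_sub.
Qed.

Lemma Gset_gyr s a b x : s <= n - 1 -> Gset n s x -> Gset n s (gyr n a b x).
Proof.
move=> hs /andP [hx dx]; rewrite /Gset gyr_lt //=.
case: s hs dx => [|s] hs dx; first by rewrite expn0 dvd1n.
by rewrite gyr_mod // (even_of_dvd _ dx) // andbF mul0n addn0.
Qed.

Lemma Gset0 s : Gset n s 0.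
Proof. by rewrite /Gset mod0n dvdn0 muln_gt0 m_gt0. Qed.

Lemma Gset_sg s : s <= n - 1 -> is_subgyrogroup n (fun x => Gset n s x).
Proof.
move=> hs; apply: subgyro_of => //.
- by move=> x /andP [].
- exact: Gset0.
- by move=> a b; apply: Gset_cl.
- by move=> a; apply: Gset_inv.
- by move=> a b x _ _; apply: Gset_gyr.
Qed.

Lemma Pset_sg s : s <= n - 1 -> is_subgyrogroup n (fun x => Pset n s x).
Proof.
move=> hs; apply: subgyro_of => //.
- by move=> x /andP [/andP []].
- by rewrite /Pset Gset0 /inH leqNgt m_gt0.
- move=> a b /andP [ha ha'] /andP [hb hb']; rewrite /Pset oplus_H.
  by rewrite (negbTE ha') (negbTE hb') Gset_cl.
- by move=> a /andP [ha ha']; rewrite /Pset inv_H // ha' Gset_inv.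
- by move=> a b x _ _ /andP [hx hx']; rewrite /Pset gyr_H ?hx' ?Gset_gyr //; case/andP: hx.
Qed.

End S.


Section S.
Variable n : nat.
Hypothesis hn : 2 < n.
Local Notation m := (mG n).
Local Notation k := (mG n %/ 2).

Lemma Kset_par s x : Kset n s x -> odd x = (s == 0) && inH n x.
Proof.
case/andP => hx d.
have d2 : 2 %| x %% m + inH n x * 2 ^ s.
  apply: dvdn_trans d; rewrite -{1}(expn1 2); exact: dvdn_exp2l.
move: d2; rewrite dvdn2 oddD oddM oddX modm_odd //= orbF.
by case: (odd x); case: (inH n x); case: (s == 0).
Qed.

Lemma Kset_cc s a b : Kset n s a -> Kset n s b -> cc n a b = false.
Proof.
move=> ha hb; rewrite /cc (Kset_par ha) (Kset_par hb).
by case: (inH n a); case: (inH n b); case: (s == 0).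
Qed.

Lemma Kset0 s : Kset n s 0.
Proof.
have h0 : inH n 0 = false by rewrite /inH leqNgt m_gt0.
by rewrite /Kset mod0n h0 muln_gt0 m_gt0 /= dvdn0.
Qed.

Lemma Kset_cl s a b : s <= n - 2 -> Kset n s a -> Kset n s b -> Kset n s (oplus n a b).
Proof.
move=> hs ha hb; have hd : 2 ^ s.+1 %| m by apply: dvd_m; lia.
have hc := Kset_cc ha hb.
case/andP: ha => ha da; case/andP: hb => hb db.
rewrite /Kset oplus_lt //= oplus_mod hc mul0n addn0 oplus_H dvdm_add //.
rewrite dvdm_add // in da; rewrite dvdm_add // in db.
have := dvdn_add da db.
have -> : a + inH n a * 2 ^ s + (b + inH n b * 2 ^ s) =
  a + b + (inH n a (+) inH n b) * 2 ^ s + (inH n a && inH n b) * 2 ^ s.+1.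
  by rewrite expnS; case: (inH n a); case: (inH n b) => /=; lia.
by rewrite dvdn_addl // dvdn_mull.
Qed.

Lemma Kset_inv s a : s <= n - 2 -> Kset n s a -> Kset n s (ginv n a).
Proof.
move=> hs /andP [ha da]; have hd : 2 ^ s.+1 %| m by apply: dvd_m; lia.
rewrite /Kset inv_lt //= inv_H inv_mod // dvdm_add //.
have hp := mod_lt n (a %% m).
have hp' : a %% m < m by apply: mod_lt.
have -> : m - a %% m + inH n a * 2 ^ s =
   (m + inH n a * 2 ^ s.+1) - (a %% m + inH n a * 2 ^ s).
  by rewrite expnS; case: (inH n a) => /=; lia.
by apply: dvdn_sub => //; rewrite dvdn_add // dvdn_mull.
Qed.

Lemma Kset_gyr s a b x : s <= n - 2 -> Kset n s x -> Kset n s (gyr n a b x).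
Proof.
move=> hs hK; have hd : 2 ^ s.+1 %| m by apply: dvd_m; lia.
have hpar := Kset_par hK.
case/andP: hK => hx dx.
rewrite /Kset gyr_lt //= gyr_H // gyr_mod // dvdm_add //.
rewrite dvdm_add // in dx.
rewrite addnAC dvdn_addl //.
case: s hs hd dx hpar => [|s] hs hd dx hpar.
  apply: dvdn_mull; rewrite expn1 dvdn2 k_even //.
by rewrite hpar /= andbF mul0n dvdn0.
Qed.

Lemma Kset_sg s : s <= n - 2 -> is_subgyrogroup n (fun x => Kset n s x).
Proof.
move=> hs; apply: subgyro_of => //.
- by move=> x /andP [].
- exact: Kset0.
- by move=> a b; apply: Kset_cl.
- by move=> a; apply: Kset_inv.
- by move=> a b x _ _; apply: Kset_gyr.
Qed.

End S.


Lemma gen_eq n (X S : nat -> Prop) : is_subgyrogroup n S -> (forall y, X y -> S y) ->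
  (forall K, is_subgyrogroup n K -> (forall y, X y -> K y) -> forall x, S x -> K x) ->
  same_set (gen n X) S.
Proof.
move=> hS hX hmin x; split; first by move=> hg; exact: hg S hS hX.
by move=> hx K hK hXK; exact: hmin K hK hXK x hx.
Qed.

Section S.
Variable n : nat.
Hypothesis hn : 2 < n.
Local Notation m := (mG n).
Local Notation k := (mG n %/ 2).

Lemma inH_small x : x < m -> inH n x = false.
Proof. by move=> h; rewrite /inH leqNgt h. Qed.

Lemma oplus_PP a b : a < m -> b < m -> oplus n a b = (a + b) %% m.
Proof.
move=> ha hb; by rewrite oplusE /cc !inH_small // /= !mul0n add0n addn0.
Qed.

Lemma oplus_Pm a : a < m -> oplus n a m = m + a.
Proof.
move=> ha; rewrite oplusE /cc inH_small // /inH leqnn /= mul1n addn0.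
by rewrite modnDr modn_small.
Qed.

Lemma iter_in (K : nat -> Prop) g : (forall a b, K a -> K b -> K (oplus n a b)) ->
  K 0 -> K g -> forall j, K (iter j (fun z => oplus n z g) 0).
Proof. by move=> hcl h0 hg; elim => [|j IH] //=; apply: hcl. Qed.

Lemma Gset_min s (K : nat -> Prop) : s <= n - 1 -> is_subgyrogroup n K ->
  K (2 ^ s) -> K m -> forall x, Gset n s x -> K x.
Proof.
move=> hs hK hg hm; case: (sg_facts hn hK) => hb h0 hcl _.
have hp : forall p, p < m -> 2 ^ s %| p -> K p.
  move=> p hp dp.
  have [e|ne] := eqVneq s (n - 1).
    have ep : p = 0.
      case: p hp dp => // p hp dp; move: (dvdn_leq (ltn0Sn p) dp).
      rewrite e; have : mG n = 2 ^ (n - 1) by rewrite /mG subn1.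
      lia.
    by rewrite ep.
  have hsm : 2 ^ s < m by rewrite /mG ltn_exp2l //; lia.
  have it : forall j, iter j (fun z => oplus n z (2 ^ s)) 0 = (j * 2 ^ s) %% m.
    elim => [|j IH]; first by rewrite /= mod0n.
    by rewrite iterS IH oplus_PP ?mod_lt // modnDml mulSn addnC.
  have := iter_in hcl h0 hg (p %/ 2 ^ s).
  by rewrite it divnK // modn_small.
move=> x /andP [hx dx].
have hxm := mod_lt n x.
rewrite (decomp hx); case: (inH n x) => /=.
  by rewrite mul1n -oplus_Pm //; apply: hcl => //; apply: hp.
by rewrite mul0n add0n; apply: hp.
Qed.

Lemma Kset_min s (K : nat -> Prop) : s <= n - 2 -> is_subgyrogroup n K ->
  K (m + 2 ^ s) -> forall x, Kset n s x -> K x.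
Proof.
move=> hs hK hg; case: (sg_facts hn hK) => hb h0 hcl _.
have hsm : 2 ^ s < m by rewrite /mG ltn_exp2l //; lia.
have it : forall j, iter j (fun z => oplus n z (m + 2 ^ s)) 0 =
    odd j * m + (j * 2 ^ s) %% m.
  elim => [|j IH]; first by rewrite /= mod0n.
  rewrite iterS IH; apply: (@ext n).
  - exact: oplus_lt.
  - by apply: hr_lt; apply: mod_lt.
  - rewrite oplus_H !hr_H ?mod_lt // /inH leq_addr.
    by rewrite oddS addbT.
  have hc : cc n (odd j * m + (j * 2 ^ s) %% m) (m + 2 ^ s) = false.
    rewrite /cc hr_H ?mod_lt // hr_odd // modm_odd // oddM oddD m_even //=.
    by case: (odd j); case: (odd (2 ^ s)).
  rewrite oplus_mod hc hr_mod ?mod_lt //.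
  rewrite (modX2 _ (hr_mod (odd j) (mod_lt n (j * 2 ^ s))) (modnDl (2 ^ s) m)).
  by rewrite mul0n addn0 mulSn addnC.
move=> x /andP [hx dx].
have hxm := mod_lt n x.
have d1 : 2 ^ s %| x %% m.
  have : 2 ^ s %| x %% m + inH n x * 2 ^ s.
    by apply: dvdn_trans dx; apply: dvdn_exp2l.
  by rewrite dvdn_addl // dvdn_mull.
have ej : x %% m = (x %% m) %/ 2 ^ s * 2 ^ s by rewrite divnK.
have oj : odd ((x %% m) %/ 2 ^ s) = inH n x.
  move: dx; rewrite {1}ej -mulnDl expnS dvdn_pmul2r ?expn_gt0 //.
  by rewrite dvdn2 oddD /=; case: (inH n x); case: (odd _).
have := iter_in hcl h0 hg ((x %% m) %/ 2 ^ s).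
by rewrite it oj -ej modn_mod -decomp.
Qed.

Lemma gen_Gset s : s <= n - 1 ->
  same_set (gen n (fun x => x = 2 ^ s \/ x = m)) (fun x => Gset n s x).
Proof.
move=> hs; have hd := dvd_m hs.
apply: gen_eq; first exact: Gset_sg.
  move=> y [->|->]; rewrite /Gset.
    rewrite dvdm // dvdnn andbT.
    have : 2 ^ s <= m by rewrite /mG leq_exp2l //; lia.
    have := m_gt0 n; lia.
  rewrite modnn dvdn0 andbT; have := m_gt0 n; lia.
move=> K hK hX; apply: Gset_min => //; apply: hX; by [left | right].
Qed.

Lemma gen_Kset s : s <= n - 2 ->
  same_set (gen n (fun x => x = m + 2 ^ s)) (fun x => Kset n s x).
Proof.
move=> hs; have hsm : 2 ^ s < m by rewrite /mG ltn_exp2l //; lia.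
apply: gen_eq; first exact: Kset_sg.
  move=> y ->; rewrite /Kset /inH leq_addr modnDl modn_small //= mul1n.
  rewrite addnn -mul2n -expnS dvdnn andbT; lia.
by move=> K hK hX; apply: Kset_min => //; apply: hX.
Qed.

End S.


Definition pb (P : Prop) : bool := if excluded_middle_informative P then true else false.
Lemma pbP (P : Prop) : pb P -> P.
Proof. by rewrite /pb; case: excluded_middle_informative. Qed.
Lemma pbT (P : Prop) : P -> pb P.
Proof. by rewrite /pb; case: excluded_middle_informative. Qed.

Section S.
Variable n : nat.
Hypothesis hn : 2 < n.
Local Notation m := (mG n).
Local Notation k := (mG n %/ 2).

Lemma mE : m = 2 ^ (n - 1).
Proof. by rewrite /mG subn1. Qed.

Lemma Dchar (K : nat -> Prop) : is_subgyrogroup n K ->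
  exists2 s, s <= n - 1 & forall x, x < m -> (K x <-> 2 ^ s %| x).
Proof.
move=> hK; case: (sg_facts hn hK) => hb h0 hcl hinv.
have hm0 := m_gt0 n.
have Kneg : forall a, K a -> 0 < a < m -> K (m - a).
  move=> a ha /andP [a0 am]; case: (hinv a ha) => b [hbK e].
  have hbm : b < m.
    have : inH n (oplus n b a) = false by rewrite e /inH leqNgt hm0.
    rewrite oplus_H (inH_small am) addbF /inH; lia.
  move: e; rewrite oplus_PP // => e.
  have eba : b + a = m.
    case: (ltnP (b + a) m) => h.
      by move: e; rewrite modn_small //; lia.
    move: e; have -> : b + a = m + (b + a - m) by lia.
    rewrite modnDl modn_small; lia.
  by have -> : m - a = b by lia.
have iterK : forall a g, K a -> K g -> a < m -> g < m ->
    forall i, K ((a + i * g) %% m).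
  move=> a g ha hg am gm; elim => [|i IH].
    by rewrite mul0n addn0 modn_small.
  have := hcl _ _ IH hg; rewrite oplus_PP ?mod_lt // modnDml.
  by rewrite mulSn [g + _]addnC addnA.
case: (classic (exists x, K x /\ 0 < x < m)) => [ex|nex]; last first.
  exists (n - 1) => // x xm; split.
    move=> hx; case: (posnP x) => [->|xp]; first exact: dvdn0.
    by exfalso; apply: nex; exists x; split => //; apply/andP.
  rewrite -mE => dx; case: (posnP x) => [->|xp] //.
  by move: (dvdn_leq xp dx); lia.
pose P := fun x => (0 < x < m) && pb (K x).
have exP : exists x, P x.
  by case: ex => x [hx hx']; exists x; rewrite /P hx' pbT.
case: (ex_minnP exP) => d /andP [dpos /pbP hd] dmin.
have /andP [d0 dm] := dpos.
have dd : forall x, x < m -> K x -> d %| x.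
  move=> x xm hx.
  have hK2 := iterK x (m - d) hx (Kneg d hd dpos) xm ltac:(lia) (x %/ d).
  have e : (x + x %/ d * (m - d)) %% m = x %% d.
    rewrite mulnBr {1}(divn_eq x d).
    have hqd : x %/ d * d <= x %/ d * m by rewrite leq_mul2l ltnW // orbT.
    have -> : x %/ d * d + x %% d + (x %/ d * m - x %/ d * d) =
              x %/ d * m + x %% d by lia.
    by rewrite modnMDl modn_small // (ltn_trans (ltn_pmod _ d0) dm).
  rewrite e in hK2; rewrite /dvdn; apply/eqP.
  case: (posnP (x %% d)) => // rp.
  have hP : P (x %% d) by rewrite /P rp (ltn_trans (ltn_pmod _ d0) dm) pbT.
  by have := leq_ltn_trans (dmin _ hP) (ltn_pmod x d0); rewrite ltnn.
have dmd : d %| m.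
  have := dd (m - d) ltac:(lia) (Kneg d hd dpos).
  by move=> h; rewrite -(subnK (ltnW dm)) dvdn_addl.
have [s hs ed] : exists2 s, s <= n - 1 & d = 2 ^ s.
  by apply/(dvdn_pfactor _ _ (isT : prime 2)); rewrite -mE.
exists s => // x xm; split; first by move/(dd x xm); rewrite -ed.
move=> dx; have := iterK 0 d h0 hd hm0 dm (x %/ d).
by rewrite add0n divnK ?ed // modn_small.
Qed.

Lemma hit p y : p < m -> y < m * 2 -> inH n y ->
  oplus n ((p + m - y %% m) %% m) y = m + p.
Proof.
move=> pm ym hy; have qm := mod_lt n y.
rewrite oplusE /cc inH_small ?mod_lt //= hy /= mul1n addn0.
rewrite -(modnDmr _ y) modnDml.
have -> : p + m - y %% m + y %% m = m + p by lia.
by rewrite modnDl modn_small.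
Qed.

Lemma classify (K : nat -> Prop) : is_subgyrogroup n K ->
  [\/ exists2 s, s <= n - 1 & same_set K (fun x => Pset n s x),
      exists2 s, s <= n - 1 & same_set K (fun x => Gset n s x)
    | exists2 s, s <= n - 2 & same_set K (fun x => Kset n s x)].
Proof.
move=> hK; case: (sg_facts hn hK) => hb h0 hcl hinv.
have hm0 := m_gt0 n.
case: (Dchar hK) => s hs hD.
have hd := dvd_m hs.
case: (classic (exists y, K y /\ m <= y)) => [[y [hy my]]|nex]; last first.
  apply: Or31; exists s => // x; split.
    move=> hx; have xm : x < m by case: (leqP m x) => // h; exfalso; apply: nex; exists x.
    rewrite /Pset /Gset inH_small // andbT modn_small // (hb _ hx) /=.
    by apply/hD.
  case/andP => /andP [hx dx] /negbTE hx'.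
  have xm : x < m by move: hx'; rewrite /inH; lia.
  by apply/hD => //; rewrite modn_small in dx.
have ym := hb _ hy.
have yH : inH n y by [].
set q := y %% m.
have qm : q < m by apply: mod_lt.
have hup : forall p, p < m -> 2 ^ s %| p + m - q -> K (m + p).
  move=> p pm dp; rewrite -(hit pm ym yH); apply: hcl => //.
  apply/hD; first exact: mod_lt.
  by rewrite (dvdm _ hd).
have hpair : 0 < s -> forall y', K y' -> m <= y' -> 2 ^ s %| q + y' %% m.
  move=> s0 y' hy' my'.
  have hyy := hcl _ _ hy hy'.
  have hyyP : oplus n y y' < m.
    have : inH n (oplus n y y') = false by rewrite oplus_H yH /inH my'.
    by rewrite /inH; lia.
  have := (hD _ hyyP).1 hyy.
  rewrite -(modn_small hyyP) oplus_mod (dvdm _ hd) => dv.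
  have hc : cc n y y' = false.
    have d2 : 2 %| y + y' + cc n y y' * k.
      apply: dvdn_trans dv; rewrite -{1}(expn1 2); exact: dvdn_exp2l.
    move: d2; rewrite /cc dvdn2 !oddD oddM k_even // andbF addbF.
    by case: (odd y); case: (odd y'); rewrite ?andbF.
  by move: dv; rewrite hc mul0n addn0 -(dvdm _ hd) -modnDm (dvdm _ hd).
have [dq|ndq] := boolP (2 ^ s %| q).
  apply: Or32; exists s => // x; split.
    move=> hx; rewrite /Gset (hb _ hx) /=.
    case: (ltnP x m) => xm; first by rewrite modn_small //; apply/hD.
    case: (posnP s) => [s0|spos]; first by rewrite s0 expn0 dvd1n.
    by have := hpair spos x hx xm; rewrite dvdn_addr.
  case/andP => hx dx.
  case: (ltnP x m) => xm; first by apply/hD => //; rewrite modn_small in dx.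
  have -> : x = m + x %% m.
    by rewrite {1}(decomp hx) /inH xm mul1n.
  apply: hup; first exact: mod_lt.
  by apply: dvdn_sub => //; apply: dvdn_add.
case: s hs hd hD hpair hup ndq => [|s] hs hd hD hpair hup ndq.
  by rewrite expn0 dvd1n in ndq.
apply: Or33; exists s; first by lia.
have hqq := hpair isT y hy my.
have d1 : 2 ^ s %| q.
  by move: hqq; rewrite addnn -muln2 expnSr dvdn_pmul2r.
have hq1 : 2 ^ s.+1 %| q + 2 ^ s.
  have ej : q = q %/ 2 ^ s * 2 ^ s by rewrite divnK.
  have nj : ~~ (2 %| q %/ 2 ^ s).
    by move: ndq; rewrite {1}ej expnS dvdn_pmul2r ?expn_gt0.
  rewrite ej -mulSnr expnS dvdn_pmul2r ?expn_gt0 //.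
  by move: nj; rewrite !dvdn2 oddS negbK.
move=> x; split.
  move=> hx; rewrite /Kset (hb _ hx) /=.
  case: (ltnP x m) => xm.
    by rewrite inH_small // mul0n addn0 modn_small //; apply/hD.
  have xH : inH n x by [].
  rewrite xH mul1n.
  have := dvdn_add (hpair isT x hx xm) (dvdnn (2 ^ s.+1)).
  rewrite (_ : q + x %% m + 2 ^ s.+1 = (q + 2 ^ s) + (x %% m + 2 ^ s)); last first.
    by rewrite expnS; lia.
  by rewrite dvdn_addr.
case/andP => hx dx; case: (ltnP x m) => xm.
  apply/hD => //; move: dx.
  by rewrite inH_small // mul0n addn0 modn_small.
have xH : inH n x by [].
move: dx; rewrite xH mul1n => dx.
have -> : x = m + x %% m by rewrite {1}(decomp hx) xH mul1n.
apply: hup; first exact: mod_lt.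
rewrite -(subnDr (2 ^ s)) addnAC.
apply: dvdn_sub => //; apply: dvdn_add => //.
Qed.
End S.


Lemma same_set_eq (A B : nat -> Prop) : same_set A B -> A = B.
Proof.
move=> h; apply: functional_extensionality => x.
by apply: propositional_extensionality.
Qed.

Section S.
Variable n : nat.
Hypothesis hn : 2 < n.
Local Notation m := (mG n).
Local Notation k := (mG n %/ 2).

Lemma gyr_even a b x : odd x = false -> gyr n a b x = x.
Proof. by move=> hx; rewrite /gyr; case: inM => //=; rewrite /Amap /OP /OH hx !andbF. Qed.

Lemma subgroup_of (S : nat -> Prop) : is_subgyrogroup n S ->
  (forall a b c, S a -> S b -> S c -> gyr n a b c = c) -> is_subgroup n S.
Proof.
move=> hS hg; case: (sg_facts hn hS) => hb _ _ _.
split => //; split => // a b c ha hb' hc.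
by rewrite G3 ?hb // hg.
Qed.

Lemma cycP_Pset s : s <= n - 1 -> same_set (cycP n s) (fun x => Pset n s x).
Proof.
move=> hs; have hd := dvd_m hs; have hm0 := m_gt0 n.
move=> x; split.
  case=> j ->; have xm := mod_lt n (j * 2 ^ s).
  rewrite /Pset /Gset inH_small // andbT modn_mod (dvdm _ hd) dvdn_mull //.
  by rewrite andbT; lia.
case/andP => /andP [hx dx] /negbTE hH.
have xm : x < m by move: hH; rewrite /inH; lia.
exists (x %/ 2 ^ s); rewrite modn_small in dx => //.
by rewrite divnK // modn_small.
Qed.

Lemma not_sg0 : gyr n 1 m 1 <> 1.
Proof.
have hk := k_gt0 hn; have hmk := mkE hn.
have h1 : 1 < m by lia.
have hk2 : 2 ^ 1 <= k by rewrite kE // leq_exp2l //; lia.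
rewrite /gyr inME // inH_small // /inH leqnn /= AmapE; last by lia.
rewrite inH_small //= mul0n add0n mul1n modn_small; rewrite ?expn1 in hk2; lia.
Qed.

End S.

Unset Implicit Arguments.

Theorem mainTheorem4 (n : nat) (hn : 3 <= n) :
  (forall H : nat -> Prop, subG n H ->
    (is_subgyrogroup n H <->
      [\/ exists2 s, s <= n - 1 & same_set H (cycP n s),
          exists2 s, s <= n - 1 &
            same_set H (gen n (fun x => x = 2 ^ s \/ x = mG n))
        | exists2 s, s <= n - 2 &
            same_set H (gen n (fun x => x = mG n + 2 ^ s))])) /\
  (forall s, s <= n - 1 ->
     (is_subgroup n (gen n (fun x => x = 2 ^ s \/ x = mG n)) <-> 0 < s)) /\
  same_set (gen n (fun x => x = 1 \/ x = mG n)) (fun x => x < 2 ^ n) /\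
  (forall s, s <= n - 2 -> is_subgroup n (gen n (fun x => x = mG n + 2 ^ s))).
Proof.
have hn' : 2 < n by [].
split.
  move=> H _; split.
    move=> hH; case: (classify hn' hH) => [[s hs e]|[s hs e]|[s hs e]].
    - apply: Or31; exists s => // x; rewrite e; exact: iff_sym (cycP_Pset hn' hs x).
    - apply: Or32; exists s => // x; rewrite e; exact: iff_sym (gen_Gset hn' hs x).
    - apply: Or33; exists s => // x; rewrite e; exact: iff_sym (gen_Kset hn' hs x).
  case => [[s hs e]|[s hs e]|[s hs e]].
  - rewrite (same_set_eq e) (same_set_eq (cycP_Pset hn' hs)); exact: Pset_sg.
  - rewrite (same_set_eq e) (same_set_eq (gen_Gset hn' hs)); exact: Gset_sg.
  - rewrite (same_set_eq e) (same_set_eq (gen_Kset hn' hs)); exact: Kset_sg.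
split.
  move=> s hs; rewrite (same_set_eq (gen_Gset hn' hs)); split.
    case=> _ [_ hg]; case: (posnP s) => // s0; exfalso.
    have G1 : Gset n s 1.
      rewrite /Gset s0 expn0 dvd1n andbT; have := m_gt0 n; lia.
    have Gm : Gset n s (mG n).
      rewrite /Gset modnn dvdn0 andbT; have := m_gt0 n; lia.
    exact: (not_sg0 hn' (hg _ _ _ G1 Gm G1)).
  move=> s0; apply: subgroup_of => //; first exact: Gset_sg.
  move=> a b c _ _ /andP [_ dc]; apply: gyr_even.
  exact: (even_of_dvd hn' s0 dc).
split.
  have := gen_Gset hn' (leq0n (n - 1)); rewrite expn0 => e x.
  rewrite e /Gset dvd1n andbT twonE //.
move=> s hs; rewrite (same_set_eq (gen_Kset hn' hs)).
apply: subgroup_of => //; first exact: Kset_sg.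
move=> a b c ha hb hc; case: (posnP s) => [s0|sp].
  rewrite /gyr inME (Kset_par hn' ha) (Kset_par hn' hb) s0 /=.
  by case: (inH n a); case: (inH n b).
by apply: gyr_even; rewrite (Kset_par hn' hc); case: s hs sp {ha hb hc}.
Qed.
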